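(* Let $G_1,G_2$ be finite simple graphs, each containing a clique on $k$ vertices, say $K_1\le G_1$ and $K_2\le G_2$. Let $H$ be the graph obtained from the disjoint union of $G_1$ and $G_2$ by identifying the vertices of $K_1$ with those of $K_2$ via a bijection (gluing along a $k$-clique $K$). Then \[\tau_H=\frac{\tau_{G_1}\tau_{G_2}}{\tau_K},\] where $K$ is the complete graph on $k$ vertices.
   Context: $X_G=\sum_\kappa\prod_v x_{\kappa(v)}$ over proper colourings $\kappa:V(G)\to\{1,2,\dots\}$. $P_\lambda$ is the disjoint union of paths with $\lambda_1,\dots,\lambda_{\ell(\lambda)}$ vertices; $\{X_{P_\lambda}\}$ is a basis of the symmetric functions over $\mathbb{Q}$. The tree polynomial is $\tau_G(x)=\sum_\lambda a_\lambda x^{\ell(\lambda)}$ where $X_G=\sum_\lambda a_\lambda X_{P_\lambda}$. *)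

(* Defs.v *)
From HB Require Import structures.
From mathcomp Require Import all_boot all_order all_algebra.
From mathcomp Require Import mpoly.

Set Implicit Arguments.
Unset Strict Implicit.
Unset Printing Implicit Defensive.

Import GRing.Theory.
Local Open Scope ring_scope.

Definition simple_graph (T : finType) (e : rel T) : Prop :=
  ssrbool.symmetric e /\ irreflexive e.

Definition proper_col (T : finType) (e : rel T) (N : nat)
  (c : {ffun T -> 'I_N}) : bool :=
  [forall u, forall v, e u v ==> (c u != c v)].

(* The chromatic symmetric function X_G, truncated to the N variables
   x_0..x_(N-1) (i.e. with x_i := 0 for i >= N).  Two symmetric functions
   are equal iff all their truncations agree. *)
Definition chrom (T : finType) (e : rel T) (N : nat) : {mpoly rat[N]} :=
  \sum_(c : {ffun T -> 'I_N} | proper_col e c) \prod_(v : T) 'X_(c v).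

(* Partitions of n, encoded as weakly decreasing n-tuples of values in
   [0,n] with sum n (padded with zeros); [partseq t] is the partition
   lambda = (lambda_1 >= ... >= lambda_l > 0). *)
Definition is_part (n : nat) (t : n.-tuple 'I_n.+1) : bool :=
  sorted geq (map val t) && (sumn (map val t) == n)%N.

Definition partseq (n : nat) (t : n.-tuple 'I_n.+1) : seq nat :=
  [seq i <- map val t | (0 < i)%N].

Definition path_vert (l : seq nat) : finType :=
  {p : 'I_(size l) * 'I_(sumn l) | (p.2 < nth 0%N l p.1)%N}.

Definition path_rel (l : seq nat) : rel (path_vert l) :=
  fun u v => ((val u).1 == (val v).1) &&
             (((val u).2.+1 == (val v).2 :> nat) ||
              ((val v).2.+1 == (val u).2 :> nat)).

(* [is_tree_poly e tau] : tau is the tree polynomial of G = (T,e), i.e.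
   X_G = sum_lambda a_lambda X_{P_lambda} (as symmetric functions, i.e. in
   every number N of variables) and tau = sum_lambda a_lambda x^{l(lambda)}.
   Since {X_{P_lambda}} is a basis, tau is uniquely determined. *)
Definition is_tree_poly (T : finType) (e : rel T) (tau : {poly rat}) : Prop :=
  exists a : seq nat -> rat,
    (forall N : nat,
       chrom e N =
       \sum_(t : #|T|.-tuple 'I_#|T|.+1 | is_part t)
          a (partseq t) *: chrom (@path_rel (partseq t)) N)
    /\ tau = \sum_(t : #|T|.-tuple 'I_#|T|.+1 | is_part t)
          a (partseq t) *: 'X^(size (partseq t)).

Definition complete_rel (k : nat) : rel 'I_k := fun i j => i != j.

Definition is_clique (T : finType) (e : rel T) (k : nat) (f : 'I_k -> T) : Prop :=
  injective f /\ forall i j, i != j -> e (f i) (f j).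

(* Gluing G1 and G2 along the k-cliques f1, f2 (f1 i identified with f2 i).
   Vertex set: V(G1) + (V(G2) minus the clique). *)
Definition glue_vert (T2 : finType) (k : nat) (f2 : 'I_k -> T2) : finType :=
  {x : T2 | x \notin codom f2}.

Definition glue_map1 (T1 T2 : finType) (k : nat) (f2 : 'I_k -> T2) (x : T1)
  : (T1 + glue_vert f2)%type := inl x.

Definition glue_map2 (T1 T2 : finType) (k : nat) (f1 : 'I_k -> T1)
  (f2 : 'I_k -> T2) (x : T2) : (T1 + glue_vert f2)%type :=
  match boolP (x \in codom f2) with
  | AltTrue h => inl (f1 (iinv h))
  | AltFalse h => inr (exist _ x h)
  end.

Definition glue_rel (T1 T2 : finType) (e1 : rel T1) (e2 : rel T2) (k : nat)
  (f1 : 'I_k -> T1) (f2 : 'I_k -> T2) : rel (T1 + glue_vert f2)%type :=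
  fun u v =>
    [exists x : T1, exists y : T1,
       [&& e1 x y, glue_map1 f2 x == u & glue_map1 f2 y == v]] ||
    [exists x : T2, exists y : T2,
       [&& e2 x y, glue_map2 f1 f2 x == u & glue_map2 f1 f2 y == v]].
Arguments glue_rel [T1 T2] e1 e2 [k] f1 f2 _ _.

(* Main.v *)
Require Import Defs.
From HB Require Import structures.
From mathcomp Require Import all_boot all_order all_algebra.
From mathcomp Require Import mpoly ring.
From mathcomp Require Import all_fingroup all_solvable.
Set Implicit Arguments.
Unset Strict Implicit.
Unset Printing Implicit Defensive.
Import GRing.Theory Num.Theory.
Local Open Scope ring_scope.

Lemma ext_perm (k N : nat) (phi phi' : 'I_k -> 'I_N) :
  injective phi -> injective phi' ->
  exists s : {perm 'I_N}, forall i, s (phi i) = phi' i.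
Proof.
move=> iph iph'.
have hk : (k <= #|'I_N|)%N by rewrite -[k]card_ord; apply: leq_card iph.
have tr := ntransitive_weak hk (Sym_trans 'I_N).
have dt : forall f : 'I_k -> 'I_N, injective f ->
    [tuple f i | i < k] \in k.-dtuple(setT).
  move=> f fi; apply/dtuple_onP; split=> [i j|i]; rewrite ?inE //.
  by rewrite !tnth_mktuple => /fi.
have [a _ ha] := atransP2 tr (dt _ iph) (dt _ iph').
exists a => i; have := congr1 (fun t => tnth t i) ha.
by rewrite /= tnth_map tnth_ord_tuple /n_act /= tnth_map tnth_map tnth_ord_tuple apermE => ->.
Qed.

Definition cnt (T : finType) (e : rel T) N :=
  #|[set c : {ffun T -> 'I_N} | proper_col e c]|.

Section Clique.
Variables (k N : nat).
Definition res (T : finType) (f : 'I_k -> T) (c : {ffun T -> 'I_N}) :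
  {ffun 'I_k -> 'I_N} := [ffun i => c (f i)].
Definition Inj := [set phi : {ffun 'I_k -> 'I_N} | injectiveb phi].
Definition Mc (T : finType) (e : rel T) (f : 'I_k -> T) phi :=
  #|[set c : {ffun T -> 'I_N} | proper_col e c && (res f c == phi)]|.

Variables (T : finType) (e : rel T) (f : 'I_k -> T).
Hypothesis cl : is_clique e f.

Lemma res_inj c : proper_col e c -> res f c \in Inj.
Proof.
move=> /forallP pc; rewrite inE; apply/injectiveP => i j; rewrite !ffunE => E.
case: (eqVneq i j) => // ne; have /forallP/(_ (f j))/implyP := pc (f i).
by rewrite E eqxx; move/(_ (cl.2 _ _ ne)).
Qed.

Lemma Mc_le phi phi' : phi \in Inj -> phi' \in Inj -> (Mc e f phi <= Mc e f phi')%N.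
Proof.
rewrite !inE => /injectiveP i1 /injectiveP i2.
have [s hs] := ext_perm i1 i2.
pose g := fun c : {ffun T -> 'I_N} => [ffun v => s (c v)].
have gi : injective g.
  by move=> c c' E; apply/ffunP => v; have := congr1 (fun h : {ffun T -> 'I_N} => h v) E;
    rewrite !ffunE => /perm_inj.
rewrite /Mc -(card_imset _ gi); apply: subset_leq_card; apply/subsetP => d.
case/imsetP => c; rewrite !inE => /andP[/forallP pc /eqP rc] ->; apply/andP; split.
  apply/forallP => u; apply/forallP => v; apply/implyP => euv.
  have /forallP/(_ v)/implyP/(_ euv) := pc u.
  by rewrite !ffunE; apply: contra => /eqP/perm_inj ->.
apply/eqP/ffunP => i; rewrite !ffunE -hs; congr (s _).
by rewrite -rc ffunE.
Qed.

Lemma cnt_sum : cnt e N = (\sum_(phi in Inj) Mc e f phi)%N.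
Proof.
rewrite /cnt -sum1_card.
rewrite (eq_bigl (fun c => proper_col e c)); last by move=> c; rewrite inE.
rewrite (partition_big (res f) (mem Inj)) /=; last exact: res_inj.
apply: eq_bigr => phi _; rewrite /Mc -sum1_card; apply: eq_bigl => c.
by rewrite inE.
Qed.

End Clique.

Lemma cntK (k N : nat) : cnt (@complete_rel k) N = #|Inj k N|.
Proof.
apply: eq_card => phi; rewrite !inE; apply/forallP/injectiveP.
  move=> H i j E; case: (eqVneq i j) => // ne.
  by have /forallP /(_ j) /implyP /(_ ne) := H i; rewrite E eqxx.
move=> inj u; apply/forallP => v; apply/implyP => ne.
by apply: contra ne => /eqP /inj ->.
Qed.

Section Glue.
Variables (T1 T2 : finType) (e1 : rel T1) (e2 : rel T2) (k N : nat)
  (f1 : 'I_k -> T1) (f2 : 'I_k -> T2).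
Hypothesis cl1 : is_clique e1 f1.
Hypothesis cl2 : is_clique e2 f2.
Local Notation VH := (T1 + glue_vert f2)%type.
Local Notation gm2 := (glue_map2 f1 f2).

Lemma gm2_codom i : gm2 (f2 i) = inl (f1 i).
Proof.
rewrite /glue_map2; destruct (boolP (f2 i \in codom f2)) as [h|h]; last by case/negP: h; apply: codom_f.
by congr (inl (f1 _)); apply: cl2.1; rewrite f_iinv.
Qed.

Lemma gm2_val (y : glue_vert f2) : gm2 (val y) = inr y.
Proof.
case: y => y h; rewrite /glue_map2 /=; destruct (boolP _) as [h'|h'].
  by case/negP: h.
by rewrite (bool_irrelevance h' h).
Qed.

Definition c1 (c : {ffun VH -> 'I_N}) : {ffun T1 -> 'I_N} := [ffun x => c (inl x)].
Definition c2 (c : {ffun VH -> 'I_N}) : {ffun T2 -> 'I_N} := [ffun y => c (gm2 y)].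

Lemma proper_glue c : proper_col (glue_rel e1 e2 f1 f2) c =
  proper_col e1 (c1 c) && proper_col e2 (c2 c).
Proof.
apply/forallP/andP => [H|[/forallP H1 /forallP H2] u].
  split; apply/forallP => x; apply/forallP => y; apply/implyP => exy; rewrite !ffunE.
    have /forallP/(_ (inl y))/implyP := H (inl x); apply.
    by apply/orP; left; apply/existsP; exists x; apply/existsP; exists y;
       rewrite exy /glue_map1 !eqxx.
  have /forallP/(_ (gm2 y))/implyP := H (gm2 x); apply.
  by apply/orP; right; apply/existsP; exists x; apply/existsP; exists y;
     rewrite exy !eqxx.
apply/forallP => v; apply/implyP => /orP[|] /existsP [x /existsP [y /and3P [exy /eqP <- /eqP <-]]].
  by have /forallP /(_ y) /implyP /(_ exy) := H1 x; rewrite !ffunE.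
by have /forallP /(_ y) /implyP /(_ exy) := H2 x; rewrite !ffunE.
Qed.

Definition Pset := [set p : {ffun T1 -> 'I_N} * {ffun T2 -> 'I_N} |
  [&& proper_col e1 p.1, proper_col e2 p.2 & res f1 p.1 == res f2 p.2]].

Lemma cntH_Pset : cnt (glue_rel e1 e2 f1 f2) N = #|Pset|.
Proof.
pose Phi := fun c => (c1 c, c2 c).
have Pi : injective Phi.
  move=> c c' [E1 E2]; apply/ffunP => [[x|y]].
    by have := congr1 (fun h : {ffun T1 -> 'I_N} => h x) E1; rewrite !ffunE.
  by have := congr1 (fun h : {ffun T2 -> 'I_N} => h (val y)) E2; rewrite !ffunE gm2_val.
rewrite /cnt -(card_imset _ Pi); apply: eq_card => p; apply/imsetP/idP.
  case=> c; rewrite !inE proper_glue => /andP[h1 h2] -> /=; rewrite h1 h2 /=.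
  by apply/eqP/ffunP => i; rewrite !ffunE gm2_codom.
case: p => p1 p2; rewrite inE /= => /and3P [h1 h2 /eqP hr].
pose c : {ffun VH -> 'I_N} := [ffun v => match v return 'I_N with inl x => p1 x | inr y => p2 (val y) end].
have E1 : c1 c = p1 by apply/ffunP => x; rewrite !ffunE.
have E2 : c2 c = p2.
  apply/ffunP => y; rewrite !ffunE; case: (boolP (y \in codom f2)) => hy.
    case/codomP: hy => i ->; rewrite gm2_codom.
    by have := congr1 (fun h : {ffun 'I_k -> 'I_N} => h i) hr; rewrite !ffunE.
  by rewrite -[y]/(val (exist _ y hy : glue_vert f2)) gm2_val.
by exists c; rewrite /Phi ?E1 ?E2 // inE proper_glue E1 E2 h1 h2.
Qed.

Lemma cntH_sum : cnt (glue_rel e1 e2 f1 f2) N =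
  (\sum_(phi in Inj k N) Mc e1 f1 phi * Mc e2 f2 phi)%N.
Proof.
rewrite cntH_Pset -sum1_card.
rewrite (eq_bigl (fun p => proper_col e1 p.1 &&
   (proper_col e2 p.2 && (res f2 p.2 == res f1 p.1)))); last first.
  by case=> p1 p2; rewrite inE /= eq_sym.
rewrite -(pair_big_dep (fun p1 => proper_col e1 p1)
   (fun p1 p2 => proper_col e2 p2 && (res f2 p2 == res f1 p1)) (fun _ _ => 1%N)) /=.
rewrite (partition_big (res f1) (mem (Inj k N))) /=; last exact: res_inj.
apply: eq_bigr => phi _.
rewrite (eq_bigr (fun _ => Mc e2 f2 phi)); last first.
  move=> p1 /andP[_ /eqP ->]; rewrite /Mc -sum1_card; apply: eq_bigl => c.
  by rewrite inE.
rewrite sum_nat_const /Mc; congr (_ * _)%N; apply: eq_card => c; rewrite !inE.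
by [].
Qed.

End Glue.
Lemma nth_le_sumn (l : seq nat) i : (nth 0 l i <= sumn l)%N.
Proof.
elim: l i => [|a l IH] [|i] //=; first exact: leq_addr.
by apply: leq_trans (IH i) _; apply: leq_addl.
Qed.

Section PathCount.
Variable l : seq nat.
Local Notation V := (path_vert l).

Definition jv (v : V) : nat := (val v).2.

Lemma card_V_pred (P : pred nat) :
  #|[pred v : V | P (jv v)]| =
  (\sum_(i < size l) \sum_(0 <= j < nth 0 l i | P j) 1)%N.
Proof.
pose Q := [pred x : 'I_(size l) * 'I_(sumn l) | (x.2 < nth 0 l x.1)%N && P x.2].
have -> : #|[pred v : V | P (jv v)]| = #|Q|.
  rewrite -(card_imset [pred v : V | P (jv v)] val_inj).
  apply: eq_card => x; rewrite !inE; apply/imsetP/idP.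
    by case=> v; rewrite inE /jv => Pv ->; rewrite (valP v).
  case/andP=> h Px; exists (Sub x h) => //; by rewrite inE /jv SubK.
rewrite -sum1_card -(pair_big_dep xpredT
   (fun (i : 'I_(size l)) (j : 'I_(sumn l)) => (j < nth 0 l i)%N && P j)
   (fun _ _ => 1%N)) /=.
apply: eq_bigr => i _.
rewrite (big_nat_widen _ _ _ _ _ (nth_le_sumn l i)) big_mkord.
by apply: eq_bigl => j; rewrite andbC.
Qed.

Lemma card_V : #|V| = sumn l.
Proof.
have := card_V_pred xpredT; rewrite (eq_card (B := V)) // => ->.
under eq_bigr do rewrite big_mkcond /= sum_nat_const_nat subn0 muln1.
rewrite sumnE (big_nth 0) big_mkord //.
Qed.

Lemma card_roots : all (fun x => 0 < x)%N l ->
  #|[pred v : V | jv v == 0%N]| = size l.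
Proof.
move=> /allP pos; rewrite (card_V_pred (pred1 0%N)).
rewrite (eq_bigr (fun _ => 1%N)) ?sum1_card ?card_ord // => i _.
have : (0 < nth 0 l i)%N by apply: pos; apply: mem_nth.
case: (nth 0 l i) => // n _.
rewrite big_mkcond big_ltn //= big1_seq // => j; rewrite mem_index_iota; case: j => // j _ /=; rewrite if_same.
Qed.


Definition par_raw (v : V) : 'I_(size l) * 'I_(sumn l) :=
  ((val v).1, Ordinal (leq_ltn_trans (leq_pred _) (ltn_ord (val v).2))).

Definition par (v : V) : V := insubd v (par_raw v).

Lemma val_par v : val (par v) = par_raw v.
Proof.
apply: insubdK; rewrite /par_raw /=.
exact: leq_ltn_trans (leq_pred _) (valP v).
Qed.

Lemma jv_par v : jv (par v) = (jv v).-1.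
Proof. by rewrite /jv val_par. Qed.

Lemma path_rel_par v : (0 < jv v)%N -> path_rel (par v) v.
Proof.
move=> h; rewrite /path_rel val_par /= eqxx /=.
by rewrite /jv in h; rewrite (prednK h) eqxx.
Qed.

Lemma path_relP u v : path_rel u v ->
  ((0 < jv v)%N && (u == par v)) || ((0 < jv u)%N && (v == par u)).
Proof.
rewrite /path_rel => /andP[/eqP e1 /orP[/eqP e2|/eqP e2]].
  apply/orP; left; rewrite /jv -e2 /=; apply/eqP/val_inj; rewrite val_par.
  rewrite /par_raw; move: e1 e2; case: (val u) => a b; case: (val v) => c d /=.
  by move=> -> e2; congr pair; apply/val_inj; rewrite /= -e2.
apply/orP; right; rewrite /jv -e2 /=; apply/eqP/val_inj; rewrite val_par.
rewrite /par_raw; move: e1 e2; case: (val u) => a b; case: (val v) => c d /=.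
by move=> -> e2; congr pair; apply/val_inj; rewrite /= -e2.
Qed.

Variable m : nat.

Definition psi (c : {ffun V -> 'I_m.+1}) : {ffun V -> 'I_m.+1} :=
  [ffun v => if (0 < jv v)%N then c v - c (par v) else c v].

Lemma psi_inj : injective psi.
Proof.
move=> c c' E; apply/ffunP => v.
suff H : forall n w, jv w = n -> c w = c' w by exact: H.
elim=> [|n IH] w Hw; have := congr1 (fun g : {ffun V -> 'I_m.+1} => g w) E; rewrite !ffunE Hw //=.
by rewrite (IH (par w)) ?jv_par ?Hw // => /addIr.
Qed.

Definition Sgood := [set g : {ffun V -> 'I_m.+1} |
   [forall v, (0 < jv v)%N ==> (g v != 0)]].

Lemma proper_psi c : proper_col (@path_rel l) c = (psi c \in Sgood).
Proof.
rewrite inE; apply/forallP/forallP => [H v|H u].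
  apply/implyP => hv; rewrite ffunE hv subr_eq0.
  by have /forallP/(_ v)/implyP := H (par v); rewrite path_rel_par // eq_sym; apply.
apply/forallP => v; apply/implyP => /path_relP /orP[/andP[hv /eqP->]|/andP[hu /eqP->]].
  by have /implyP := H v; rewrite ffunE hv subr_eq0 eq_sym; apply.
by have /implyP := H u; rewrite ffunE hu subr_eq0; apply.
Qed.

Lemma card_proper_path :
  #|[set c : {ffun V -> 'I_m.+1} | proper_col (@path_rel l) c]| = #|Sgood|.
Proof.
rewrite -(card_imset _ psi_inj); apply: eq_card => g.
apply/imsetP/idP.
  by case=> c; rewrite inE => Hc ->; rewrite -proper_psi.
move=> Hg; have [psi' K1 K2] := injF_bij psi_inj.
by exists (psi' g); rewrite ?K2 // in_set proper_psi K2.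
Qed.


Lemma card_Sgood : #|Sgood| =
  (\prod_(v : V) (if (0 < jv v)%N then m else m.+1))%N.
Proof.
pose F := fun v : V => if (0 < jv v)%N then predC1 (0 : 'I_m.+1) else predT.
have -> : #|Sgood| = #|family F|.
  apply: eq_card => g; rewrite inE; apply/forallP/familyP => H v.
    by have /implyP := H v; rewrite /F; case: ifP => // _ h; rewrite inE h.
  by have := H v; rewrite /F; case: ifP => //= _; rewrite inE.
rewrite card_family foldrE big_map big_enum; apply: eq_bigr => v _.
by rewrite /F; case: ifP => _; rewrite ?cardC1 card_ord.
Qed.

Lemma cnt_path : all (fun x => 0 < x)%N l ->
  #|[set c : {ffun V -> 'I_m.+1} | proper_col (@path_rel l) c]| =
  (m.+1 ^ size l * m ^ (sumn l - size l))%N.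
Proof.
move=> pos; rewrite card_proper_path card_Sgood (bigID (fun v => 0 < jv v)%N) /=.
rewrite (eq_bigr (fun _ => m)); last by move=> v ->.
rewrite [X in (_ * X)%N](eq_bigr (fun _ => m.+1)); last by move=> v /negbTE ->.
rewrite !prod_nat_const mulnC; congr (_ ^ _ * _ ^ _)%N.
  apply: etrans (card_roots pos); apply: eq_card => v; rewrite !inE.
  by rewrite -!topredE /= lt0n negbK.
rewrite -[in RHS]card_V -[X in (_ - X)%N](card_roots pos) -(cardC [pred v : V | jv v == 0%N]).
rewrite addKn; apply: eq_card => v; rewrite -!topredE /= inE; by case: (jv v).
Qed.

End PathCount.

Lemma chrom_eval (T : finType) (e : rel T) N :
  (chrom e N).@[fun _ => 1] = (cnt e N)%:R.
Proof.
rewrite /chrom rmorph_sum /=.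
rewrite (eq_bigr (fun _ => 1)); last first.
  by move=> c _; rewrite rmorph_prod /=; apply: big1 => v _; rewrite mevalXU.
by rewrite sumr_const /cnt cardsE.
Qed.

Lemma sumn_pos (s : seq nat) : sumn [seq i <- s | (0 < i)%N] = sumn s.
Proof. by elim: s => //= a s IH; case: a => //= a; rewrite IH. Qed.

Lemma arith_lem (m : nat) (q : rat) (l n : nat) : (l <= n)%N ->
  q * (m.+2 ^ l * m.+1 ^ (n - l))%N%:R =
  (m.+1%:R ^+ n) * (q * ((m.+2)%:R / (m.+1)%:R) ^+ l).
Proof.
move=> hl; rewrite -[in RHS](subnK hl) exprD expr_div_n natrM !natrX.
by field; rewrite expf_neq0 // pnatr_eq0.
Qed.

Lemma tree_eval (T : finType) (e : rel T) (tau : {poly rat}) (m : nat) :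
  is_tree_poly e tau ->
  (cnt e m.+2)%:R = (m.+1%:R ^+ #|T|) * tau.[(m.+2)%:R / (m.+1)%:R].
Proof.
case=> a [Hc ->]; rewrite -chrom_eval Hc rmorph_sum horner_sum mulr_sumr /=.
apply: eq_bigr => t /andP[_ /eqP hs].
rewrite mevalZ chrom_eval /cnt cnt_path ?filter_all //.
have hl : (size (partseq t) <= #|T|)%N.
  by rewrite /partseq size_filter (leq_trans (count_size _ _)) // size_map size_tuple.
rewrite /partseq sumn_pos hs -/(partseq t) hornerZ hornerXn.
exact: arith_lem.
Qed.

Lemma glue_count (T1 T2 : finType) (e1 : rel T1) (e2 : rel T2) (k N : nat)
  (f1 : 'I_k -> T1) (f2 : 'I_k -> T2) :
  is_clique e1 f1 -> is_clique e2 f2 ->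
  (cnt (glue_rel e1 e2 f1 f2) N * cnt (@complete_rel k) N =
   cnt e1 N * cnt e2 N)%N.
Proof.
move=> cl1 cl2.
rewrite (cntH_sum N cl1 cl2) (cnt_sum N cl1) (cnt_sum N cl2) cntK.
have [->|/set0Pn [phi0 hphi0]] := eqVneq (Inj k N) set0.
  by rewrite !big_set0.
have C1 : forall phi, phi \in Inj k N -> Mc e1 f1 phi = Mc e1 f1 phi0.
  by move=> phi h; apply/anti_leq; rewrite !Mc_le.
have C2 : forall phi, phi \in Inj k N -> Mc e2 f2 phi = Mc e2 f2 phi0.
  by move=> phi h; apply/anti_leq; rewrite !Mc_le.
rewrite (eq_bigr (fun _ => Mc e1 f1 phi0 * Mc e2 f2 phi0)%N); last first.
  by move=> phi h; rewrite C1 ?C2.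
rewrite (eq_bigr (fun _ => Mc e1 f1 phi0) C1) (eq_bigr (fun _ => Mc e2 f2 phi0) C2).
rewrite !sum_nat_const.
by ring.
Qed.

Lemma card_glue (T1 T2 : finType) (k : nat) (f2 : 'I_k -> T2) :
  injective f2 -> (#|{: T1 + glue_vert f2}| + k = #|T1| + #|T2|)%N.
Proof.
move=> inj; rewrite card_sum card_sig -addnA; congr (_ + _)%N.
rewrite -(cardC (mem (codom f2))) card_codom // card_ord addnC; congr (_ + _)%N.
Qed.

Theorem corollary4p1 (T1 T2 : finType) (e1 : rel T1) (e2 : rel T2) (k : nat)
  (f1 : 'I_k -> T1) (f2 : 'I_k -> T2)
  (tau1 tau2 tauK tauH : {poly rat}) :
  simple_graph e1 -> simple_graph e2 ->
  is_clique e1 f1 -> is_clique e2 f2 ->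
  is_tree_poly e1 tau1 -> is_tree_poly e2 tau2 ->
  is_tree_poly (@complete_rel k) tauK ->
  is_tree_poly (glue_rel e1 e2 f1 f2) tauH ->
  tauK != 0 /\ tauH * tauK = tau1 * tau2.
Proof.
move=> _ _ cl1 cl2 t1 t2 tK tH.
pose x (m : nat) : rat := (m.+2)%:R / (m.+1)%:R.
have key : forall m, (tauH * tauK - tau1 * tau2).[x m] = 0.
  move=> m; have := congr1 (fun n => n%:R : rat) (glue_count m.+2 cl1 cl2).
  rewrite /= !natrM (tree_eval m t1) (tree_eval m t2) (tree_eval m tK).
  rewrite (tree_eval m tH) card_ord mulrACA -exprD [RHS]mulrACA -exprD.
  rewrite card_glue; last exact: cl2.1.
  move/(mulfI (expf_neq0 _ _)); rewrite pnatr_eq0 => /(_ isT) E.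
  by rewrite hornerD hornerN !hornerM -/(x m) E subrr.
split.
  apply/negP => /eqP K0; have := tree_eval k tK; rewrite K0 horner0 mulr0.
  move/eqP; rewrite pnatr_eq0 cntK => /eqP/cards0_eq E0.
  have : [ffun i => widen_ord (leq_trans (leqnSn k) (leqnSn k.+1)) i] \in Inj k k.+2.
    rewrite inE; apply/injectiveP => i j; rewrite !ffunE => /(congr1 val) /= E.
    exact: val_inj.
  by rewrite E0 inE.
apply/eqP; rewrite -subr_eq0; apply/negPn/negP => hP.
have := max_poly_roots hP (rs := [seq x m | m <- iota 0 (size (tauH * tauK - tau1 * tau2))]).
rewrite size_map size_iota ltnn; move=> H; apply: notF; apply: H.
  by apply/allP => r /mapP [m _ ->]; rewrite /root key.
rewrite map_inj_uniq ?iota_uniq // => m m'; rewrite /x => /eqP.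
rewrite eqr_div ?pnatr_eq0 // -!natrM eqr_nat => /eqP E.
have : (m'.+1 = m.+1)%N.
  by move: E; rewrite [(m.+2 * _)%N]mulSn [(m'.+2 * _)%N]mulSn [(m'.+1 * m.+1)%N]mulnC => /addIn.
by case => ->.
Qed.
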